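(* Let $f(x,y)=x^2y+x^2+y^2-y\in\mathbb{Z}[x,y]$. Define $R^{(1)}(x,x_1)=f(x,x_1)$ and, for $n\ge2$, $R^{(n)}(x,x_n)=\mathrm{Res}_{x_{n-1}}\big(R^{(n-1)}(x,x_{n-1}),\,f(x_{n-1},x_n)\big)$, the resultant with respect to $x_{n-1}$; set $R_n(x)=R^{(n)}(x,x)$. Then $\deg R_n(x)=2^{n+1}-1$ for all $n\ge1$. *)

(* Defs.v *)
From mathcomp Require Import all_boot all_order all_algebra.
Set Implicit Arguments. Unset Strict Implicit. Unset Printing Implicit Defensive.
Import GRing.Theory.
Local Open Scope ring_scope.

(* Bivariate polynomials P(x, y) in Z[x,y] are represented as
   {poly {poly int}}: outer variable y, coefficients in Z[x]. *)

Definition f_xy : {poly {poly int}} :=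
  (('X ^+ 2 : {poly int})%:P) * 'X + (('X ^+ 2 : {poly int})%:P) + 'X ^+ 2 - 'X.

(* f(x_{n-1}, x_n) viewed as a polynomial in x_{n-1} whose coefficients lie in
   Z[x][x_n] = {poly {poly int}} (outer x_n, inner x):
   (x_n + 1) x_{n-1}^2 + (x_n^2 - x_n). *)
Definition f_shift : {poly {poly {poly int}}} :=
  (('X + 1 : {poly {poly int}}) *: 'X ^+ 2)
  + (('X ^+ 2 - 'X : {poly {poly int}})%:P).

(* Rsup k = R^{(k+1)}(x, x_{k+1}), outer variable x_{k+1}, inner x.
   R^{(1)} = f(x, x_1);
   R^{(n)} = Res_{x_{n-1}} (R^{(n-1)}(x, x_{n-1}), f(x_{n-1}, x_n)), where
   R^{(n-1)} is lifted to a polynomial in x_{n-1} with coefficients in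
   Z[x][x_n] (constant in x_n). *)
Fixpoint Rsup (k : nat) : {poly {poly int}} :=
  match k with
  | 0 => f_xy
  | k'.+1 => resultant (map_poly polyC (Rsup k')) f_shift
  end.

Definition Rdiag (n : nat) : {poly int} := (Rsup n.-1).[('X : {poly int})].

(* Main.v *)
Require Import Defs.
From mathcomp Require Import all_boot all_order all_algebra.
From mathcomp Require Import perm zify polyXY.
Set Implicit Arguments. Unset Strict Implicit. Unset Printing Implicit Defensive.
Import GRing.Theory.
Local Open Scope ring_scope.

Lemma mul_top (R : comNzRingType) (p q : {poly R}) m n :
  (size p <= m.+1)%N -> (size q <= n.+1)%N ->
  (size (p * q)%R <= (m + n).+1)%N /\ (p * q)`_(m + n) = p`_m * q`_n.
Proof.
move=> hp hq; split.
  apply: leq_trans (size_polyMleq _ _) _.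
  move: (leq_add hp hq); rewrite addSn addnS /=; case: (size p + size q)%N => //= k; rewrite ltnS.
rewrite coefM (bigD1 (Ordinal (leq_addr n m.+1 : (m < (m + n).+1)%N))) //=.
rewrite addKn big1 ?addr0 // => j /eqP hj.
have [ltjm|ltmj|ejm] := ltngtP j m.
- rewrite (@nth_default _ _ q) ?mulr0 //; apply: leq_trans hq _.
  by rewrite ltn_subRL ltn_add2r.
- by rewrite nth_default ?mul0r //; apply: leq_trans hp _.
- by case: hj; apply: val_inj.
Qed.

Lemma prod_top (R : comNzRingType) (I : Type) (r : seq I) (F : I -> {poly R})
  (w : I -> nat) : (forall i, size (F i) <= (w i).+1)%N ->
  (size (\prod_(i <- r) F i)%R <= (\sum_(i <- r) w i).+1)%N /\
  (\prod_(i <- r) F i)`_(\sum_(i <- r) w i)%N = \prod_(i <- r) (F i)`_(w i).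
Proof.
move=> hF; elim: r => [|a r [IH1 IH2]].
  by rewrite !big_nil size_poly1 coef1.
rewrite !big_cons; have [h1 h2] := mul_top (hF a) IH1.
by rewrite h2 IH2.
Qed.

Lemma det_top (R : comNzRingType) n (A : 'M[{poly R}]_n) (w : 'I_n -> nat) :
  (forall i j, size (A i j) <= (w i).+1)%N ->
  (size (\det A) <= (\sum_i w i)%N.+1)%N /\
  (\det A)`_(\sum_i w i)%N = \det (\matrix_(i, j) (A i j)`_(w i)).
Proof.
move=> hA; split.
  apply: leq_trans (size_sum _ _ _) _; apply/bigmax_leqP => s _ /=.
  have [h1 _] := prod_top (index_enum 'I_n) (fun i => hA i ((s : {perm 'I_n}) i)).
  by case: (odd_perm s); rewrite ?expr1 ?mulN1r ?size_opp ?expr0 ?mul1r.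
rewrite /determinant coef_sum; apply: eq_bigr => s _ /=.
have [_ h2] := prod_top (index_enum 'I_n) (fun i => hA i ((s : {perm 'I_n}) i)).
under [in RHS]eq_bigr do rewrite mxE.
case: (odd_perm s); rewrite ?expr1 ?mulN1r ?coefN ?expr0 ?mul1r.
all: try congr (- _); exact: h2.
Qed.

Lemma detL (R : comNzRingType) m : forall n (A : 'M[R]_n) (F : nat -> nat -> R),
  n = m.+2 -> (forall i j : 'I_n, A i j = F i j) ->
  (forall i j, (1 < i)%N -> (i < n)%N -> (j < n)%N -> F i j = (j == i - 2)%N%:R) ->
  \det A = F 0%N m * F 1%N m.+1 - F 0%N m.+1 * F 1%N m.
Proof.
elim: m => [|m IH] n A F En hA hF; subst n.
  all: try have hm : (m < m.+3)%N by exact: leqW (leqW (ltnSn m)).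
  rewrite (expand_det_row _ ord0) !big_ord_recl big_ord0 addr0 /cofactor.
  rewrite !det_mx11 !mxE !hA /=.
  rewrite expr0 mul1r expr1 mulN1r mulrN.
  by [].
rewrite (expand_det_row _ ord_max) (bigD1 (inord m)) //= big1 ?addr0; last first.
  move=> j /negbTE hj; rewrite hA hF //= ?ltn_ord //.
  by rewrite -(inj_eq val_inj) /= inordK // in hj; rewrite !subSS subn0 hj mul0r.
rewrite hA hF //= inordK // !subSS subn0 eqxx mul1r /cofactor.
have -> : (-1) ^+ (m.+2 + (inord m : 'I_m.+3))%N = 1 :> R.
  by rewrite inordK // -signr_odd addSn addSn /= negbK oddD addbb.
rewrite mul1r (IH _ _ (fun i j => F i (j + (m <= j))%N)) //.
- by rewrite leqnn leqnSn !addn1.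
- move=> i j; rewrite !mxE hA /=; congr (F _ _).
  + by rewrite /bump leqNgt (ltn_ord i).
  + by rewrite /bump inordK // addnC.
move=> i j hi1 hi hj /=; rewrite hF //; last first.
  by rewrite (leq_ltn_trans (leq_add (leqnn j) (leq_b1 _))) // addn1.
  by apply: ltnW.
case: leqP => hmj; rewrite ?addn0 ?addn1 //.
have -> : (j.+1 == i - 2)%N = false by apply/eqP; lia.
have -> : (j == i - 2)%N = false by apply/eqP; lia.
by [].
Qed.

Lemma coef_neq0_size (R : nzRingType) (p : {poly R}) i : p`_i != 0 -> (i < size p)%N.
Proof. by rewrite ltnNge; apply: contra => h; rewrite nth_default. Qed.

Lemma f_shift_coef k : f_shift`_k =
  (if k == 2%N then 'X + 1 else 0) + (if k == 0%N then 'X ^+ 2 - 'X else 0).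
Proof.
rewrite /f_shift coefD coefZ coefXn coefC.
by case: (k == 2%N); case: (k == 0%N); rewrite ?mulr1 ?mulr0.
Qed.

Lemma size_f_shift : size f_shift = 3%N.
Proof.
apply/eqP; rewrite eqn_leq; apply/andP; split.
  apply/leq_sizeP => k hk; rewrite f_shift_coef.
  by case: k hk => [|[|[|k]]] //= _; rewrite addr0.
apply: coef_neq0_size; rewrite f_shift_coef eqxx [(2 == 0)%N]/= addr0.
have -> : ('X + 1 : {poly {poly int}}) = 'X + (1 : {poly int})%:P by rewrite polyC1.
by rewrite -size_poly_eq0 size_XaddC.
Qed.

Definition SylF (P : {poly {poly int}}) (i j : nat) : {poly {poly int}} :=
  if (i < 2)%N then (P`_(j - i))%:P *+ (i <= j)%N
  else if j == (i - 2)%N then 'X ^+ 2 - 'X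
  else if j == i then 'X + 1 else 0.

Lemma det_cast (R : comNzRingType) n m (A : 'M[R]_n) (B : 'M[R]_m) (e : n = m) :
  (forall i j, A i j = B (cast_ord e i) (cast_ord e j)) -> \det A = \det B.
Proof.
case: m / e B => B h; congr (\det _); apply/matrixP => i j.
by rewrite h !cast_ord_id.
Qed.

Lemma if_help (T : zmodType) (a b : T) t :
  (if t == 2%N then a else 0) + (if t == 0%N then b else 0) =
  (if t == 0%N then b else if t == 2%N then a else 0).
Proof. by case: t => [|[|[|t]]] /=; rewrite ?addr0 ?add0r. Qed.

Lemma resE (P : {poly {poly int}}) d : size P = d.+1 ->
  resultant (map_poly polyC P) f_shift =
  \det (\matrix_(i < d.+2, j < d.+2) SylF P i j).
Proof.
move=> sP.
have e : ((size f_shift).-1 + (size (map_poly polyC P)).-1)%N = d.+2.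
  by rewrite size_map_polyC sP size_f_shift.
rewrite /resultant; apply: (@det_cast _ _ _ (Sylvester_mx _ _) _ e) => i j.
rewrite Sylvester_mxE mxE /SylF /=.
case: splitP => k hk.
  have k2 : (k < 2)%N by have := ltn_ord k; rewrite [X in (_ < X.-1)%N -> _]size_f_shift.
  by rewrite hk k2 coef_map.
have hk2 : (i : nat) = (k + 2)%N by rewrite hk addnC; congr (_ + _)%N; rewrite [in LHS]size_f_shift.
rewrite hk2 /= f_shift_coef.
rewrite ltnNge leq_addl /= addnK.
have [hkj|hkj] := leqP k j; last first.
  rewrite mulr0n; have -> : (j == k :> nat) = false by apply/negbTE; rewrite neq_ltn hkj.
  by have -> : (j == k + 2 :> nat)%N = false by apply/negbTE; rewrite neq_ltn ltn_addr.
rewrite mulr1n; move: (nat_of_ord j) (nat_of_ord k) hkj => j' k' hkj.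
move: j' k' hkj; clear => j' k' hkj.
rewrite -(subnK hkj) addnK; move: (j' - k')%N => t.
have E1 : (t + k' == k')%N = (t == 0)%N by rewrite -{2}(add0n k') eqn_add2r.
have E2 : (t + k' == k' + 2)%N = (t == 2)%N by rewrite addnC eqn_add2l.
rewrite E1 E2; exact: if_help.
Qed.

Lemma size_X2X (R : nzRingType) : (size ('X ^+ 2 - 'X : {poly R})%R <= 3)%N.
Proof.
apply/leq_sizeP => i hi; rewrite coefB coefXn coefX.
by case: i hi => [|[|[|i]]] //= _; rewrite subrr.
Qed.

Lemma size_X1 (R : nzRingType) : (size ('X + 1 : {poly R})%R <= 2)%N.
Proof.
apply/leq_sizeP => i hi; rewrite coefD coefX coef1.
by case: i hi => [|[|i]] //= _; rewrite addr0.
Qed.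

Lemma sum_w n c : (\sum_(i < n.+2) (if (i < 2)%N then 0 else c))%N = (c * n)%N.
Proof.
rewrite !big_ord_recl /= big_const_ord iter_addn_0 //.
Qed.

Lemma sum_w' n c : (\sum_(i < n.+2) (if (i < 2)%N then c else 0))%N = (c * 2)%N.
Proof.
by rewrite !big_ord_recl /= big1 ?muln2 ?addn0 -?addnn.
Qed.

Definition Inv (P : {poly {poly int}}) d := [/\ size P = d.+1, (size (P`_d)%R <= 1)%N,
  (size (swapXY P) <= d.+1)%N, P`_d.-1`_d != 0 & (1 < d)%N].

Lemma stepY P d : Inv P d ->
  let R' := resultant (map_poly polyC P) f_shift in
  (size R' <= (d.*2).+1)%N /\ R'`_(d.*2) = P`_d * P`_d.
Proof.
case=> sP sPd sPY c0 d1 /=; rewrite (resE sP).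
set M := \matrix_(i < d.+2, j < d.+2) SylF P i j.
have [] := @det_top _ _ M (fun i => if (i < 2)%N then 0%N else 2%N).
  move=> i j; rewrite mxE /SylF; case: ifP => _.
    by case: (i <= j)%N; rewrite ?mulr1n ?mulr0n ?size_polyC ?leq_b1 ?size_poly0.
  case: ifP => _; first exact: size_X2X.
  by case: ifP => _; [exact: leq_trans (size_X1 _) _ | rewrite size_poly0].
rewrite sum_w -mul2n => -> ->; split => //.
rewrite (@detL _ d _ _ (fun i j => (SylF P i j)`_(if (i < 2)%N then 0%N else 2%N))) //.
- rewrite /SylF /= !subn0 subSS subn0 (ltnW d1) !mulr1n !coefC /=.
  by rewrite (@nth_default _ _ P d.+1) ?sP // mul0r subr0.

- by move=> i j; rewrite !mxE.
move=> i j i1 _ _; rewrite /SylF; have -> : (i < 2)%N = false by apply/negbTE; rewrite -leqNgt.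
case: ifP => _; first by rewrite coefB coefXn coefX subr0.
case: ifP => _; last by rewrite coef0.
by rewrite coefD coefX coef1 addr0.
Qed.

Definition NF (P : {poly {poly int}}) d (i j : nat) : {poly int} :=
  if (i < 2)%N then (P`_(j - i)`_d)%:P *+ (i <= j)%N
  else if j == (i - 2)%N then 'X ^+ 2 - 'X
  else if j == i then 'X + 1 else 0.

Lemma sizeY_coef (P : {poly {poly int}}) d i :
  (size (swapXY P) <= d)%N -> (size (P`_i)%R <= d)%N.
Proof. by move=> h; rewrite -sizeYE in h; exact: leq_trans (max_size_coefXY _ _) h. Qed.

Lemma stepX P d : Inv P d ->
  let R' := resultant (map_poly polyC P) f_shift in
  (size (swapXY R') <= (d.*2).+1)%N /\
  (swapXY R')`_(d.*2)`_((d.*2).-1) = P`_d.-1`_d * P`_d.-1`_d.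
Proof.
case=> sP sPd sPY c0 d1 /=; rewrite (resE sP) -det_map_mx.
set M := map_mx _ _.
have [] := @det_top _ _ M (fun i => if (i < 2)%N then d else 0%N).
  move=> i j; rewrite !mxE /SylF; case: ifP => _.
    rewrite rmorphMn /= swapXY_polyC.
    case: (i <= j)%N; rewrite ?mulr1n ?mulr0n ?size_poly0 //.
    by rewrite size_map_polyC; apply: sizeY_coef.
  case: ifP => _.
    rewrite rmorphB rmorphXn /= swapXY_X.
    have -> : ('X%:P ^+ 2 - 'X%:P : {poly {poly int}}) = ('X ^+ 2 - 'X)%:P.
      by rewrite rmorphB rmorphXn.
    by rewrite size_polyC leq_b1.
  case: ifP => _; last by rewrite rmorph0 size_poly0.
  rewrite rmorphD rmorph1 /= swapXY_X.
  have -> : ('X%:P + 1 : {poly {poly int}}) = ('X + 1)%:P by rewrite rmorphD rmorph1.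
  by rewrite size_polyC leq_b1.
rewrite sum_w' -muln2 => -> ->; split => //.
have -> : \matrix_(i, j) (M i j)`_(if (i < 2)%N then d else 0%N) =
          \matrix_(i < d.+2, j < d.+2) NF P d i j.
  apply/matrixP => i j; rewrite !mxE /SylF /NF; case: ifP => _.
    by rewrite rmorphMn /= swapXY_polyC coefMn coef_map.
  case: ifP => _.
    rewrite rmorphB rmorphXn /= swapXY_X.
    have -> : ('X%:P ^+ 2 - 'X%:P : {poly {poly int}}) = ('X ^+ 2 - 'X)%:P.
      by rewrite rmorphB rmorphXn.
    by rewrite coefC.
  case: ifP => _; last by rewrite rmorph0 coef0.
  rewrite rmorphD rmorph1 /= swapXY_X.
  have -> : ('X%:P + 1 : {poly {poly int}}) = ('X + 1)%:P by rewrite rmorphD rmorph1.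
  by rewrite coefC.
have [e de] : exists e, d = e.+2 by exists (d - 2)%N; lia.
subst d.
rewrite (expand_det_col _ ord_max) (bigD1 ord_max) //= big1 ?addr0; last first.
  move=> i /eqP hi; rewrite mxE /NF.
  case: ifP => i2.
    case: i hi i2 => [[|[|i]] hi] //= _ _.
      by rewrite subn0 (@nth_default _ _ P) ?sP // coef0 mul0r.
    by rewrite subSS subn0 (@nth_default _ _ P`_e.+2) ?mulr1n ?coef0 ?mul0r //; apply: leq_trans sPd _.
  have -> : (e.+3 == i - 2)%N = false by apply/eqP; have := ltn_ord i; lia.
  have -> : (e.+3 == i)%N = false.
    by apply/eqP => h; apply: hi; apply: val_inj; exact: (esym h).
  by rewrite mul0r.
rewrite mxE /NF /= (_ : (e.+3 == e.+1)%N = false); last by apply/eqP; lia.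
rewrite eqxx /cofactor -signr_odd addnn odd_double expr0 mul1r.
set N2 := row' _ _.
have eN2 : forall i j : 'I_e.+3, N2 i j = NF P e.+2 i j.
  move=> i j; rewrite !mxE; congr NF; rewrite /= /bump leqNgt ltn_ord //.
have [] := @det_top _ _ N2 (fun i => if (i < 2)%N then 0%N else 2%N).
  move=> i j; rewrite eN2 /NF; case: ifP => _.
    by case: (i <= j)%N; rewrite ?mulr1n ?mulr0n ?size_polyC ?leq_b1 ?size_poly0.
  case: ifP => _; first exact: size_X2X.
  by case: ifP => _; [exact: leq_trans (size_X1 _) _ | rewrite size_poly0].
rewrite sum_w => h1 h2.
have [_ h3] := mul_top (size_X1 _) h1.
have -> : ((e.+1 * 2).+1 = 1 + 2 * e.+1)%N by lia.
rewrite h3.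
rewrite h2 coefD coefX coef1 /= addr0 mul1r.
rewrite (@detL _ e.+1 _ _ (fun i j => (NF P e.+2 i j)`_(if (i < 2)%N then 0%N else 2%N))) //.
- rewrite /NF /= !subn0 subSS subn0 !mulr1n !coefC /=.
  by rewrite (@nth_default _ _ P`_e.+2) ?mul0r ?subr0 //; apply: leq_trans sPd _.
- by move=> i j; rewrite mxE eN2.
move=> i j i1 _ _; rewrite /NF; have -> : (i < 2)%N = false by apply/negbTE; rewrite -leqNgt.
case: ifP => _; first by rewrite coefB coefXn coefX subr0.
case: ifP => _; last by rewrite coef0.
by rewrite coefD coefX coef1 addr0.
Qed.

Lemma Inv_step P d : Inv P d -> Inv (resultant (map_poly polyC P) f_shift) (d.*2).
Proof.
move=> hI; have [s1 s2] := stepY hI; have [x1 x2] := stepX hI.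
case: hI => sP sPd sPY c0 d1.
have Pd0 : P`_d != 0.
  have : lead_coef P != 0 by rewrite lead_coef_eq0 -size_poly_eq0 sP.
  by rewrite lead_coefE sP.
split => //.
- apply/eqP; rewrite eqn_leq s1 /=; apply: coef_neq0_size.
  by rewrite s2 mulf_neq0.
- rewrite s2; apply: leq_trans (size_polyMleq _ _) _.
  by move: sPd; case: (size P`_d) => [|[|]].
- by rewrite -coef_swapXY x2 mulf_neq0.
- by rewrite -addnn; apply: ltn_addl.
Qed.

Lemma f_xy_coef k : f_xy`_k =
  ('X ^+ 2 : {poly int}) * (k == 1%N)%:R + (if k == 0%N then 'X ^+ 2 else 0)
  + (k == 2%N)%:R - (k == 1%N)%:R.
Proof. by rewrite /f_xy coefB coefD coefD coefCM coefX coefC coefXn. Qed.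

Lemma Inv_base : Inv f_xy 2.
Proof.
have c0 : f_xy`_0 = 'X ^+ 2 by rewrite f_xy_coef mulr0 add0r addr0 subr0.
have c1 : f_xy`_1 = 'X ^+ 2 - 1 by rewrite f_xy_coef mulr1 addr0 addr0.
have c2 : f_xy`_2 = 1 by rewrite f_xy_coef mulr0 add0r add0r subr0.
have c3 : forall k, (3 <= k)%N -> f_xy`_k = 0.
  move=> k hk; rewrite f_xy_coef.
  case: k hk => [|[|[|k]]] // _.
  by rewrite mulr0 add0r add0r subr0.
have sX2 : (size ('X ^+ 2 - 1 : {poly int})%R <= 3)%N.
  apply/leq_sizeP => i hi; rewrite coefB coefXn coef1.
  by case: i hi => [|[|[|i]]] // _; rewrite subr0.
split.
- apply/eqP; rewrite eqn_leq; apply/andP; split; first by apply/leq_sizeP.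
  by apply: coef_neq0_size; rewrite c2 oner_eq0.
- by rewrite c2 size_poly1.
- rewrite -sizeYE; apply/bigmax_leqP => i _.
  case: i => [[|[|[|i]]] hi] /=.
  + by rewrite c0 size_polyXn.
  + by rewrite c1.
  + by rewrite c2 size_poly1.
  + by rewrite c3 ?size_poly0.
- by rewrite c1 coefB coefXn coef1 subr0 oner_eq0.
- by [].
Qed.

Lemma diag P d : Inv P d -> size (P.['X]) = d.*2.
Proof.
case=> sP sPd sPY c0 d1.
have sc i : (size (P`_i)%R <= d.+1)%N by apply: sizeY_coef.
have ce k : (P.['X])`_k = \sum_(i < d.+1) (if (k < i)%N then 0 else P`_i`_(k - i)).
  by rewrite horner_coef sP coef_sum; apply: eq_bigr => i _; rewrite coefMXn.
apply/eqP; rewrite eqn_leq; apply/andP; split.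
  apply/leq_sizeP => k hk; rewrite ce big1 // => i _.
  case: ifP => // _; apply: nth_default.
  have [ltid|] := ltnP i d.
    by apply: leq_trans (sc i) _; lia.
  move=> hid; have ed : (i : nat) = d by have := ltn_ord i; lia.
  by rewrite ed; apply: leq_trans sPd _; lia.
have -> : d.*2 = (d.*2).-1.+1 by lia.
apply: coef_neq0_size; rewrite ce (bigD1 (inord d.-1)) //= big1 ?addr0.
  rewrite inordK; last by lia.
  rewrite ifF; last by apply/negbTE; rewrite -leqNgt; lia.
  by have -> : ((d.*2).-1 - d.-1 = d)%N by lia.
move=> i hi; case: ifP => // _; apply: nth_default.
have hi' : (i : nat) <> d.-1.
  by move=> h; move: hi; rewrite -(inj_eq val_inj) /= inordK ?h ?eqxx //; lia.
have [ltid|] := ltnP i d.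
  by apply: leq_trans (sc i) _; lia.
move=> hid; have ed : (i : nat) = d by have := ltn_ord i; lia.
by rewrite ed; apply: leq_trans sPd _; lia.
Qed.

Lemma Inv_Rsup k : Inv (Rsup k) (2 ^ k.+1).
Proof.
elim: k => [|k IH]; first exact: Inv_base.
by rewrite /= expnS mul2n; apply: Inv_step.
Qed.

Theorem mainTheorem19 (n : nat) : (1 <= n)%N ->
  ((size (Rdiag n)).-1 = 2 ^ n.+1 - 1)%N.
Proof.
case: n => // n _; rewrite /Rdiag /= (diag (Inv_Rsup n)).
by rewrite -mul2n -expnS subn1.
Qed.
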